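(* Let $P^1(z) = \tfrac12 z(1+z)$ and let $\mathcal K^1$ be the filled Julia set of $P^1$ (equivalently, the closure of the basin of attraction $U^1$ of the attracting fixed point $0$ of $P^1$). Fix bounds $d \ge 2$, $K \ge 2$, $M \ge \tfrac12$ and an escape radius $R$ for these bounds. Then there exist $\lambda > 1$ depending only on $P^1$ and $c > 0$ depending only on $d, K, M$ and $P^1$ such that the following holds: if $\{P_m\}_{m=1}^\infty$ is any bounded sequence of polynomials with bounds $d,K,M$ and $N \ge 1$ is such that $P_1 = P_2 = \cdots = P_N = P^1$, then \[ \mathrm m\big(\mathcal S^N \setminus \mathcal K^1\big) < c\,\lambda^{-N}, \] where $\mathcal S^N = Q_N^{-1}(\mathrm D(0,R))$ and $\mathrm m$ denotes two-dimensional Lebesgue measure.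
   Context: A bounded sequence of polynomials with bounds $d \ge 2$, $K \ge 1$, $M \ge 0$ is a sequence $\{P_m\}_{m=1}^\infty$ with $P_m(z) = a_{d_m,m}z^{d_m} + \dots + a_{0,m}$, $2 \le d_m \le d$, $1/K \le |a_{d_m,m}| < K$ and $|a_{k,m}| \le M$ for $0 \le k \le d_m - 1$. $Q_{m,n} = P_n \circ \cdots \circ P_{m+1}$ and $Q_N = Q_{0,N}$. An escape radius for the bounds is a number $R>0$, depending only on $d,K,M$, such that for every bounded sequence with these bounds, every $m \ge 0$ and every $|z| > R$, $|Q_{m,n}(z)| \to \infty$ as $n \to \infty$. $\mathrm D(a,r)$ denotes the open disc of centre $a$ and radius $r$. *)

(* Defs.v *)
From Stdlib Require Import Reals Lra.
Open Scope R_scope.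

Definition Cx := (R * R)%type.
Definition Cadd (z w : Cx) : Cx := (fst z + fst w, snd z + snd w).
Definition Cmul (z w : Cx) : Cx :=
  (fst z * fst w - snd z * snd w, fst z * snd w + snd z * fst w).
Definition Cnorm (z : Cx) : R := sqrt (fst z * fst z + snd z * snd z).
Definition Cone : Cx := (1, 0).
Fixpoint Cpow (z : Cx) (n : nat) : Cx :=
  match n with O => Cone | S n => Cmul z (Cpow z n) end.

Record cpoly := mkCpoly { deg : nat; coef : nat -> Cx }.

Fixpoint sum_upto (f : nat -> Cx) (n : nat) : Cx :=
  match n with O => f O | S n => Cadd (sum_upto f n) (f (S n)) end.

Definition peval (p : cpoly) (z : Cx) : Cx :=
  sum_upto (fun k => Cmul (coef p k) (Cpow z k)) (deg p).

Definition bounded_seq (d : nat) (K M : R) (P : nat -> cpoly) : Prop :=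
  forall m : nat, (1 <= m)%nat ->
    (2 <= deg (P m) <= d)%nat /\
    / K <= Cnorm (coef (P m) (deg (P m))) < K /\
    (forall k : nat, (k < deg (P m))%nat -> Cnorm (coef (P m) k) <= M).

(** Qfrom P m k = P_{m+k} o ... o P_{m+1}; thus Q_{m,n} = Qfrom P m (n-m)
    and Q_N = Qfrom P 0 N. *)
Fixpoint Qfrom (P : nat -> cpoly) (m k : nat) (z : Cx) : Cx :=
  match k with
  | O => z
  | S k' => peval (P (m + k)%nat) (Qfrom P m k' z)
  end.

Definition QN (P : nat -> cpoly) (N : nat) (z : Cx) : Cx := Qfrom P 0 N z.

Definition escape_radius (d : nat) (K M R0 : R) : Prop :=
  R0 > 0 /\
  forall P : nat -> cpoly, bounded_seq d K M P ->
  forall (m : nat) (z : Cx), Cnorm z > R0 ->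
  forall B : R, exists n0 : nat, forall k : nat, (n0 <= k)%nat ->
    Cnorm (Qfrom P m k z) > B.

Definition P1 (z : Cx) : Cx := Cmul (1/2, 0) (Cmul z (Cadd Cone z)).

Definition filled_julia_P1 (z : Cx) : Prop :=
  exists B : R, forall n : nat, Cnorm (Nat.iter n P1 z) <= B.

(** Two-dimensional Lebesgue (outer) measure, via countable covers by open
    rectangles (a,b) x (c,e).  [lebesgue_lt A t] means m(A) < t, i.e. the
    infimum of total areas of countable rectangle covers of A is < t, i.e.
    some cover has (convergent) total area < t. *)
Definition rect := (R * R * R * R)%type.
Definition in_rect (r : rect) (z : Cx) : Prop :=
  let '(a, b, c, e) := r in a < fst z < b /\ c < snd z < e.
Definition rect_area (r : rect) : R :=
  let '(a, b, c, e) := r in Rmax 0 (b - a) * Rmax 0 (e - c).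

Definition lebesgue_lt (A : Cx -> Prop) (t : R) : Prop :=
  exists (r : nat -> rect) (s : R),
    (forall z, A z -> exists n, in_rect (r n) z) /\
    infinite_sum (fun n => rect_area (r n)) s /\ s < t.

(* Main.v *)
Require Import Defs.
From Stdlib Require Import Reals Lra Psatz Arith ZArith.
From Coquelicot Require Import Complex.
Open Scope R_scope.

Lemma Cnorm_Cmod (z : Cx) : Cnorm z = Cmod z.
Proof. unfold Cnorm, Cmod. f_equal. simpl. ring. Qed.

Lemma Cnorm_mul a b : Cnorm (Cmul a b) = Cnorm a * Cnorm b.
Proof. rewrite !Cnorm_Cmod. apply (Cmod_mult a b). Qed.

Lemma Cnorm_add a b : Cnorm (Cadd a b) <= Cnorm a + Cnorm b.
Proof. rewrite !Cnorm_Cmod. apply (Cmod_triangle a b). Qed.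

Lemma Cnorm_pos a : 0 <= Cnorm a.
Proof. unfold Cnorm. apply sqrt_pos. Qed.

Lemma Cnorm_sq a : Cnorm a * Cnorm a = fst a * fst a + snd a * snd a.
Proof. unfold Cnorm. apply sqrt_sqrt. nra. Qed.

Lemma Cnorm_real r : 0 <= r -> Cnorm (r, 0) = r.
Proof. intros. unfold Cnorm. simpl. replace (r*r+0*0) with (r*r) by ring. now apply sqrt_square. Qed.

Lemma Cnorm_fst a : Rabs (fst a) <= Cnorm a.
Proof. rewrite Cnorm_Cmod. apply re_le_Cmod. Qed.

Lemma Cnorm_snd a : Rabs (snd a) <= Cnorm a.
Proof. pose proof (Cnorm_sq a). pose proof (Cnorm_pos a).
  apply Rabs_le. split; nra. Qed.

Lemma Cnorm_lt a b r : 0 < r -> a * a + b * b < r * r -> Cnorm (a, b) < r.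
Proof. intros. unfold Cnorm; simpl. rewrite <- (sqrt_square r) by lra.
  apply sqrt_lt_1; nra. Qed.

Definition hh : Cx := (1/2, 0).
Definition Cs (a b : Cx) : Cx := (fst a - fst b, snd a - snd b).

Definition csqrt (u : Cx) : Cx :=
  (sqrt ((Cnorm u + fst u)/2),
   (if Rle_dec 0 (snd u) then 1 else -1) * sqrt ((Cnorm u - fst u)/2)).

Lemma csqrt_spec u :
  fst (csqrt u) * fst (csqrt u) - snd (csqrt u) * snd (csqrt u) = fst u /\
  2 * fst (csqrt u) * snd (csqrt u) = snd u.
Proof.
  pose proof (Cnorm_sq u) as Hs. pose proof (Cnorm_pos u) as Hp.
  set (m := Cnorm u) in *. destruct u as [x y]. simpl in *.
  assert (Hx1 : 0 <= (m + x)/2) by nra.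
  assert (Hx2 : 0 <= (m - x)/2) by nra.
  assert (Hm : sqrt ((m + x)/2) * sqrt ((m - x)/2) = Rabs y / 2).
  { rewrite <- sqrt_mult_alt by lra.
    rewrite <- (sqrt_square (Rabs y / 2)) by (pose proof (Rabs_pos y); lra).
    f_equal. replace (Rabs y / 2 * (Rabs y / 2)) with (Rabs y * Rabs y / 4) by field.
    rewrite <- Rabs_mult. rewrite Rabs_right by nra. nra. }
  pose proof (sqrt_sqrt _ Hx1). pose proof (sqrt_sqrt _ Hx2).
  fold m. destruct (Rle_dec 0 y).
  - rewrite Rabs_right in Hm by lra. split.
    + rewrite !Rmult_1_l. lra.
    + rewrite !Rmult_1_l. lra.
  - rewrite Rabs_left in Hm by lra. split.
    + replace (-1 * sqrt ((m - x) / 2) * (-1 * sqrt ((m - x) / 2))) with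
        (sqrt ((m - x) / 2) * sqrt ((m - x) / 2)) by ring. lra.
    + replace (2 * sqrt ((m + x) / 2) * (-1 * sqrt ((m - x) / 2))) with
        (-2 * (sqrt ((m + x) / 2) * sqrt ((m - x) / 2))) by ring. lra.
Qed.

Lemma real_core a b rho : 0 <= a -> 0 <= b -> a * b < 2 * rho -> a + b > 3 ->
  0 < rho <= 1/100 -> a < 7/10 * rho \/ b < 7/10 * rho.
Proof.
  intros.
  destruct (Rle_dec a b).
  - left. assert (a < 15/100) by nra. assert (b > 285/100) by lra.
    assert (a * (285/100) < 2 * rho) by nra. assert (a < 1/100) by nra.
    assert (b > 299/100) by lra. nra.
  - right. assert (b < 15/100) by nra. assert (a > 285/100) by lra.
    assert (b * (285/100) < 2 * rho) by nra. assert (b < 1/100) by nra.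
    assert (a > 299/100) by lra. nra.
Qed.
Lemma pair_eq (a b : Cx) : fst a = fst b -> snd a = snd b -> a = b.
Proof. destruct a, b; simpl; intros; subst; auto. Qed.

Lemma core z c rho : 0 < rho <= 1/100 -> Cnorm (Cs (P1 z) c) < rho ->
  Cnorm (Cadd z hh) > 3/2 ->
  Cnorm (Cs z (fst (csqrt (2*fst c + 1/4, 2*snd c)) - 1/2, snd (csqrt (2*fst c + 1/4, 2*snd c)))) < 7/10*rho \/
  Cnorm (Cs z (- fst (csqrt (2*fst c + 1/4, 2*snd c)) - 1/2, - snd (csqrt (2*fst c + 1/4, 2*snd c)))) < 7/10*rho.
Proof.
  intros Hr H1 H2.
  pose proof (csqrt_spec (2*fst c + 1/4, 2*snd c)) as SS. revert SS.
  generalize (csqrt (2*fst c + 1/4, 2*snd c)). intros [p q] [S1 S2].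
  destruct z as [x y]. destruct c as [c1 c2]. simpl in *.
  set (A := Cs (x, y) (p - 1/2, q)). set (B := Cs (x, y) (- p - 1/2, - q)).
  assert (EM : Cmul A B = Cmul (2,0) (Cs (P1 (x,y)) (c1,c2))).
  { apply pair_eq; unfold A, B, Cs, P1, Cmul, Cadd, Cone; simpl; nra. }
  assert (EA : Cadd A B = Cmul (2,0) (Cadd (x,y) hh)).
  { apply pair_eq; unfold A, B, Cs, hh, Cmul, Cadd; simpl; lra. }
  assert (M1 : Cnorm A * Cnorm B < 2 * rho).
  { rewrite <- Cnorm_mul, EM, Cnorm_mul, Cnorm_real by lra. lra. }
  assert (M2 : Cnorm A + Cnorm B > 3).
  { pose proof (Cnorm_add A B). rewrite EA, Cnorm_mul, Cnorm_real in H by lra. lra. }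
  apply real_core; auto using Cnorm_pos.
Qed.

Lemma invariant z : Cnorm (Cadd z hh) <= 3/2 -> Cnorm (Cadd (P1 z) hh) <= 3/2.
Proof.
  intros H.
  assert (E : Cadd (P1 z) hh = Cadd (Cmul (1/2,0) (Cmul (Cadd z hh) (Cadd z hh))) (3/8, 0)).
  { destruct z as [x y]; apply pair_eq; unfold P1, hh, Cmul, Cadd, Cone; simpl; field. }
  set (w := Cadd z hh) in *.
  rewrite E. eapply Rle_trans. apply Cnorm_add.
  rewrite !Cnorm_mul, !Cnorm_real by lra. pose proof (Cnorm_pos w). nra.
Qed.

Lemma norm_shift z : Cnorm z <= Cnorm (Cadd z hh) + 1/2.
Proof.
  replace z with (Cadd (Cadd z hh) (-1/2, 0)) at 1.
  2:{ destruct z; apply pair_eq; unfold hh, Cadd; simpl; lra. }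
  eapply Rle_trans. apply Cnorm_add.
  replace (Cnorm (-1/2,0)) with (1/2). lra.
  unfold Cnorm; simpl. replace (-1/2 * (-1/2) + 0 * 0) with (1/2*(1/2)) by field.
  rewrite sqrt_square; lra.
Qed.
Lemma pow7_le1 j : 0 < (7/10)^j <= 1.
Proof. induction j; simpl; lra || nra. Qed.

Lemma term_le_sum (f : nat -> R) : (forall k, 0 <= f k) ->
  forall i n, (n <= i)%nat -> f n <= sum_f_R0 f i.
Proof.
  intros Hf i. induction i; intros n Hn.
  - replace n with 0%nat by lia. simpl. lra.
  - destruct (Nat.eq_dec n (S i)) as [->|Hne].
    + simpl. pose proof (IHi 0%nat ltac:(lia)). pose proof (Hf 0%nat). lra.
    + simpl. pose proof (IHi n ltac:(lia)). pose proof (Hf (S i)). lra.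
Qed.

Lemma escape_all z : ~ filled_julia_P1 z ->
  forall i, Cnorm (Cadd (Nat.iter i P1 z) hh) > 3/2.
Proof.
  intros Hf i. destruct (Rle_lt_dec (Cnorm (Cadd (Nat.iter i P1 z) hh)) (3/2)) as [Hle|]; [|lra].
  exfalso. apply Hf.
  exists (2 + sum_f_R0 (fun k => Cnorm (Nat.iter k P1 z)) i).
  assert (Hs : forall n, (n <= i)%nat -> Cnorm (Nat.iter n P1 z) <= sum_f_R0 (fun k => Cnorm (Nat.iter k P1 z)) i).
  { intros n Hn. apply (term_le_sum (fun k => Cnorm (Nat.iter k P1 z))); auto using Cnorm_pos. }
  assert (Hk : forall k, Cnorm (Cadd (Nat.iter (i + k) P1 z) hh) <= 3/2).
  { induction k. rewrite Nat.add_0_r; auto. rewrite Nat.add_succ_r. simpl. now apply invariant. }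
  intro n. pose proof (Hs 0%nat ltac:(lia)). pose proof (Cnorm_pos (Nat.iter 0 P1 z)).
  destruct (le_lt_dec n i).
  - pose proof (Hs n l). lra.
  - replace n with (i + (n - i))%nat by lia. pose proof (norm_shift (Nat.iter (i + (n - i)) P1 z)).
    pose proof (Hk (n - i)%nat). lra.
Qed.

Lemma QN_iter (P : nat -> cpoly) N :
  (forall m : nat, (1 <= m <= N)%nat -> forall z : Cx, peval (P m) z = P1 z) ->
  forall k z, (k <= N)%nat -> Qfrom P 0 k z = Nat.iter k P1 z.
Proof.
  intros HP k. induction k; intros z Hk; simpl; auto.
  rewrite HP by lia. now rewrite IHk by lia.
Qed.

Definition grid (L : nat) (h : R) (n : nat) : Cx :=
  ((INR (n / (2*L+1)) - INR L) * h, (INR (n mod (2*L+1)) - INR L) * h).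

Fixpoint cen (L : nat) (h : R) (j n : nat) : Cx :=
  match j with
  | O => grid L h n
  | S j => let c := cen L h j (Nat.div2 n) in
           let s := csqrt (2*fst c + 1/4, 2*snd c) in
           if Nat.even n then (fst s - 1/2, snd s) else (- fst s - 1/2, - snd s)
  end.

Lemma grid_coord L h x : 0 < h -> Rabs x < INR L * h ->
  exists k, (k < 2*L+1)%nat /\ Rabs (x - (INR k - INR L) * h) <= h.
Proof.
  intros Hh Hx. apply Rabs_def2 in Hx as [Hx1 Hx2].
  set (t := x / h + INR L).
  assert (Ht0 : 0 < t). { unfold t. apply Rmult_lt_reg_r with h; auto.
    unfold Rdiv. rewrite Rmult_plus_distr_r, Rmult_assoc, Rinv_l, Rmult_1_r by lra. lra. }
  assert (Ht1 : t < 2 * INR L). { unfold t. apply Rmult_lt_reg_r with h; auto.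
    unfold Rdiv. rewrite Rmult_plus_distr_r, Rmult_assoc, Rinv_l, Rmult_1_r by lra. lra. }
  destruct (archimed t) as [A1 A2].
  assert (Hm : (0 < up t)%Z). { apply lt_IZR. simpl. lra. }
  exists (Z.to_nat (up t)).
  assert (E : INR (Z.to_nat (up t)) = IZR (up t)).
  { rewrite INR_IZR_INZ, Z2Nat.id; auto; lia. }
  split.
  - apply INR_lt. rewrite E, plus_INR, mult_INR. simpl. lra.
  - rewrite E. apply Rabs_le.
    assert (x = (t - INR L) * h). { unfold t. field. lra. }
    split; nra.
Qed.

Lemma sq_le a h : Rabs a <= h -> a * a <= h * h.
Proof. intros H. pose proof (Rsqr_abs a) as E. unfold Rsqr in E. rewrite E. pose proof (Rabs_pos a). nra. Qed.

Lemma base_cover L h z R0 : 0 < h -> R0 <= INR L * h -> Cnorm z < R0 ->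
  exists n, (n < (2*L+1)*(2*L+1))%nat /\ Cnorm (Cs z (grid L h n)) < 2 * h.
Proof.
  intros Hh HR Hz.
  pose proof (Cnorm_fst z). pose proof (Cnorm_snd z).
  destruct (grid_coord L h (fst z) Hh ltac:(lra)) as [k1 [Hk1 B1]].
  destruct (grid_coord L h (snd z) Hh ltac:(lra)) as [k2 [Hk2 B2]].
  exists (k1 * (2*L+1) + k2)%nat. split. nia.
  assert (D : ((k1 * (2*L+1) + k2) / (2*L+1) = k1)%nat).
  { symmetry. apply Nat.div_unique with (r := k2); lia. }
  assert (Mo : ((k1 * (2*L+1) + k2) mod (2*L+1) = k2)%nat).
  { symmetry. apply Nat.mod_unique with (q := k1); lia. }
  unfold grid, Cs. cbn [fst snd]. rewrite D, Mo.
  apply Cnorm_lt; [lra|].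
  apply sq_le in B1; apply sq_le in B2. nra.
Qed.
Lemma cen_S L h j n : cen L h (S j) n =
  (if Nat.even n then (fst (csqrt (2*fst (cen L h j (Nat.div2 n)) + 1/4, 2*snd (cen L h j (Nat.div2 n)))) - 1/2,
                       snd (csqrt (2*fst (cen L h j (Nat.div2 n)) + 1/4, 2*snd (cen L h j (Nat.div2 n)))))
   else (- fst (csqrt (2*fst (cen L h j (Nat.div2 n)) + 1/4, 2*snd (cen L h j (Nat.div2 n)))) - 1/2,
         - snd (csqrt (2*fst (cen L h j (Nat.div2 n)) + 1/4, 2*snd (cen L h j (Nat.div2 n)))))).
Proof. reflexivity. Qed.

Lemma claim L R0 : R0 <= INR L * (1/200) -> forall j z,
  (forall i, (i < j)%nat -> Cnorm (Cadd (Nat.iter i P1 z) hh) > 3/2) ->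
  Cnorm (Nat.iter j P1 z) < R0 ->
  exists n, (n < (2*L+1)*(2*L+1)*2^j)%nat /\
    Cnorm (Cs z (cen L (1/200) j n)) < 1/100 * (7/10)^j.
Proof.
  intros HR j. induction j; intros z Hi Hz.
  - simpl in Hz. destruct (base_cover L (1/200) z R0 ltac:(lra) HR Hz) as [n [Hn Hc]].
    exists n. split. simpl; lia. simpl. lra.
  - destruct (IHj (P1 z)) as [n [Hn Hc]].
    + intros i Hi'. rewrite <- Nat.iter_succ_r. apply Hi. lia.
    + rewrite <- Nat.iter_succ_r. exact Hz.
    + pose proof (pow7_le1 j).
      destruct (core z (cen L (1/200) j n) (1/100 * (7/10)^j)) as [C|C].
      * split; nra.
      * exact Hc.
      * apply (Hi 0%nat). lia.
      * exists (2 * n)%nat. split. rewrite Nat.pow_succ_r'. nia.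
        rewrite cen_S. rewrite Nat.div2_double, Nat.even_even.
        simpl pow. replace (1/100 * (7/10 * (7/10)^j)) with (7/10 * (1/100 * (7/10)^j)) by ring.
        exact C.
      * exists (2 * n + 1)%nat. split. rewrite Nat.pow_succ_r'. nia.
        rewrite cen_S. rewrite Nat.even_odd. rewrite Nat.add_1_r, Nat.div2_succ_double.
        simpl pow. replace (1/100 * (7/10 * (7/10)^j)) with (7/10 * (1/100 * (7/10)^j)) by ring.
        exact C.
Qed.

Lemma sum_const_le (u : nat -> R) a : (forall n, u n <= a) -> forall m, sum_f_R0 u m <= INR (S m) * a.
Proof. intros H m. induction m; simpl sum_f_R0. simpl. rewrite Rmult_1_l. auto.
  rewrite S_INR. pose proof (H (S m)). lra. Qed.

Lemma inf_sum_finite (u : nat -> R) K : (1 <= K)%nat -> (forall n, (K <= n)%nat -> u n = 0) ->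
  infinite_sum u (sum_f_R0 u (K-1)).
Proof.
  intros HK H eps Heps. exists (K-1)%nat. intros n Hn.
  assert (E : forall k, sum_f_R0 u (K-1+k) = sum_f_R0 u (K-1)).
  { induction k. now rewrite Nat.add_0_r. rewrite Nat.add_succ_r. simpl. rewrite IHk, H by lia. ring. }
  replace n with (K-1 + (n-(K-1)))%nat by lia. rewrite E. unfold Rdist.
  rewrite Rminus_diag, Rabs_R0. lra.
Qed.
Theorem lemma2p1 :
  exists lam : R, lam > 1 /\
  forall (d : nat) (K M : R),
    (2 <= d)%nat -> 2 <= K -> 1/2 <= M ->
    forall R0 : R, escape_radius d K M R0 ->
    exists c : R, c > 0 /\
    forall (P : nat -> cpoly) (N : nat),
      bounded_seq d K M P -> (1 <= N)%nat ->
      (forall m : nat, (1 <= m <= N)%nat -> forall z : Cx, peval (P m) z = P1 z) ->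
      lebesgue_lt
        (fun z : Cx => Cnorm (QN P N z) < R0 /\ ~ filled_julia_P1 z)
        (c * / lam ^ N).
Proof.
  exists (50/49). split. lra.
  intros d K M _ _ _ R0 [HR0 _].
  set (L := Z.to_nat (up (R0 / (1/200)))).
  assert (HL : R0 <= INR L * (1/200)).
  { destruct (archimed (R0 / (1/200))) as [A1 A2].
    assert (Hm : (0 < up (R0 / (1/200)))%Z). { apply lt_IZR. simpl.
      assert (0 < R0 / (1/200)) by (apply Rdiv_lt_0_compat; lra). lra. }
    unfold L. rewrite INR_IZR_INZ, Z2Nat.id by lia.
    assert (R0 = R0 / (1/200) * (1/200)) by (field). lra. }
  set (G := ((2*L+1)*(2*L+1))%nat).
  assert (HG : 0 < INR G). { apply lt_0_INR. unfold G. nia. }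
  exists (8 * INR G / 10000). split. lra.
  intros P N _ HN HP.
  set (rho := 1/100 * (7/10)^N).
  set (Ntot := (G * 2^N)%nat).
  assert (HNt : (1 <= Ntot)%nat). { unfold Ntot, G. pose proof (Nat.pow_nonzero 2 N). nia. }
  set (r := fun n : nat => if (n <? Ntot)%nat then
        ((fst (cen L (1/200) N n) - rho, fst (cen L (1/200) N n) + rho),
          snd (cen L (1/200) N n) - rho, snd (cen L (1/200) N n) + rho)
        else (0,0,0,0)).
  exists r, (sum_f_R0 (fun n => rect_area (r n)) (Ntot - 1)).
  pose proof (pow7_le1 N) as Hp7.
  assert (Harea : forall n, rect_area (r n) <= 4 * (rho * rho)).
  { intro n. unfold r. destruct (n <? Ntot)%nat; unfold rect_area.
    - rewrite !Rmax_right by (unfold rho; nra). unfold rho; nra.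
    - rewrite Rmax_left by lra. unfold rho; nra. }
  split; [|split].
  - intros z [Hz Hj].
    unfold QN in Hz. rewrite (QN_iter P N HP N z (le_n N)) in Hz.
    destruct (claim L R0 HL N z (fun i _ => escape_all z Hj i) Hz) as [n [Hn Hc]].
    exists n. unfold r. replace (n <? Ntot)%nat with true.
    2:{ symmetry. apply Nat.ltb_lt. unfold Ntot, G. exact Hn. }
    fold rho in Hc. pose proof (Cnorm_fst (Cs z (cen L (1/200) N n))).
    pose proof (Cnorm_snd (Cs z (cen L (1/200) N n))).
    unfold Cs in *. cbn [fst snd] in *. unfold in_rect.
    pose proof (Rabs_def2 _ _ (Rle_lt_trans _ _ _ H Hc)).
    pose proof (Rabs_def2 _ _ (Rle_lt_trans _ _ _ H0 Hc)). lra.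
  - apply inf_sum_finite; auto. intros n Hn. unfold r.
    replace (n <? Ntot)%nat with false.
    2:{ symmetry. apply Nat.ltb_ge. exact Hn. }
    unfold rect_area. rewrite Rmax_left by lra. ring.
  - eapply Rle_lt_trans. apply (sum_const_le _ _ Harea).
    replace (S (Ntot - 1)) with Ntot by lia.
    unfold Ntot. rewrite mult_INR, pow_INR. simpl (INR 2).
    rewrite <- pow_inv. unfold rho.
    assert (E : (/(50/49))^N = (1+1)^N * ((7/10)^N * (7/10)^N)).
    { rewrite <- !Rpow_mult_distr. f_equal. field. }
    rewrite E.
    assert (Ha : 0 < (1+1)^N) by (apply pow_lt; lra).
    assert (Hpos : 0 < INR G * (1+1)^N * ((7/10)^N * (7/10)^N)).
    { apply Rmult_lt_0_compat. nra. nra. }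
    nra.
Qed.
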